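(* Let $\boldsymbol{d}$ be a graphical degree sequence with minimum degree at least $3$. Let $(G,H)$ be a switch on $\mathcal{G}(n,\boldsymbol{d})$ which removes the edges $a_1a_2,a_3a_4$ and inserts the edges $a_1a_3,a_2a_4$, and let $D=\{a_1,a_2,a_3,a_4\}$. Suppose that all of the following hold: neither of the diagonals $a_1a_4$, $a_2a_3$ is an edge of $G$; no pair of vertices in $D$ has a common neighbour in $G$; and there is no triangle in $G$ on vertices $a_j,u,w$ with $j\in[4]$ and $\{u,w\}\cap D=\emptyset$. Then there is a triangle-switch simulation path of length at most $5$ from $G$ to $H$.
   Context: $\mathcal{G}(n,\boldsymbol{d})$ is the set of labelled simple graphs on $[n]$ with vertex $i$ of degree $d_i$. A switch $(G,H)$ on $\mathcal{G}(n,\boldsymbol{d})$: $G\in\mathcal{G}(n,\boldsymbol{d})$, $F$ is a set of two vertex-disjoint edges of $G$ on vertex set $\{a_1,a_2,a_3,a_4\}$, $F'$ is a different perfect matching of these four vertices with $F'\cap(E(G)\setminus F)=\emptyset$, and $H$ has edge set $(E(G)\setminus F)\cup F'$. A triangle switch is a switch $(G,H)$ such that for some pair $aa'\in F\cup F'$, $a$ and $a'$ have a common neighbour in $G$ outside $\{a_1,a_2,a_3,a_4\}$. A triangle-switch simulation path of length $\kappa$ from $G$ to $H$ is a sequence $G=X_0,X_1,\dots,X_\kappa=H$ of graphs in $\mathcal{G}(n,\boldsymbol{d})$ such that each $(X_i,X_{i+1})$ is a triangle switch. *)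

(* Defs.v *)
From mathcomp Require Import all_boot.

Set Implicit Arguments. Unset Strict Implicit. Unset Printing Implicit Defensive.

(* A labelled simple graph on [n] = 'I_n is given by its edge set:
   a set of 2-element subsets of 'I_n. *)
Definition graph (n : nat) := {set {set 'I_n}}.

Definition is_simple n (G : graph n) : bool :=
  [forall e in G, #|e| == 2].

Definition adj n (G : graph n) (x y : 'I_n) : bool :=
  (x != y) && ([set x; y] \in G).

Definition deg n (G : graph n) (i : 'I_n) : nat :=
  #|[set e in G | i \in e]|.

Definition in_Gnd n (d : 'I_n -> nat) (G : graph n) : Prop :=
  is_simple G /\ forall i, deg G i = d i.

Definition graphical n (d : 'I_n -> nat) : Prop := exists G, in_Gnd d G.

Definition switch_via n (d : 'I_n -> nat) (G H : graph n)
    (F F' : {set {set 'I_n}}) : Prop :=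
  [/\ in_Gnd d G /\ in_Gnd d H,
      [/\ F \subset G, #|F| = 2, trivIset F & #|cover F| = 4],
      [/\ partition F' (cover F), [forall e in F', #|e| == 2] & F' != F],
      F' :&: (G :\: F) = set0
    & H = (G :\: F) :|: F'].

Definition is_switch n (d : 'I_n -> nat) (G H : graph n) : Prop :=
  exists F F', switch_via d G H F F'.

Definition is_triangle_switch n (d : 'I_n -> nat) (G H : graph n) : Prop :=
  exists F F', switch_via d G H F F' /\
    exists e, e \in F :|: F' /\
      exists v, v \notin cover F /\ forall x, x \in e -> adj G x v.

Definition tsim_path n (d : 'I_n -> nat) (G H : graph n) (kappa : nat) : Prop :=
  exists X : nat -> graph n,
    [/\ X 0 = G, X kappa = H,
        forall i, i <= kappa -> in_Gnd d (X i)
      & forall i, i < kappa -> is_triangle_switch d (X i) (X i.+1)].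

(* Main.v *)
Require Import Defs.
From mathcomp Require Import all_boot zify.
Set Implicit Arguments. Unset Strict Implicit. Unset Printing Implicit Defensive.


Lemma set2E (T : finType) (a b c e : T) :
  ([set a; b] == [set c; e]) = ((a == c) && (b == e) || (a == e) && (b == c)).
Proof.
apply/eqP/idP.
- move=> H.
  have ha : a \in [set c; e] by rewrite -H !inE eqxx.
  have hb : b \in [set c; e] by rewrite -H !inE eqxx orbT.
  have hc : c \in [set a; b] by rewrite H !inE eqxx.
  have he : e \in [set a; b] by rewrite H !inE eqxx orbT.
  move: ha hb hc he; rewrite !inE.
  by move=> /orP[] /eqP ? /orP[] /eqP ? /orP[] /eqP ? /orP[] /eqP ?; subst; rewrite ?eqxx ?orbT.
- case/orP=> /andP[/eqP -> /eqP ->] //; exact: setUC.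
Qed.

Lemma set2C (T : finType) (a b : T) : [set a; b] = [set b; a].
Proof. exact: setUC. Qed.

Lemma card_filt2 (T : finType) (P Q : {set T}) i : P != Q ->
  #|[set f in [set P; Q] | i \in f]| = (i \in P) + (i \in Q).
Proof.
move=> nPQ.
rewrite -sum1dep_card /=.
rewrite (eq_bigl (fun f => (f \in [set P; Q]) && (i \in f))); last by move=> f; rewrite inE.
rewrite big_mkcondr /=.
rewrite big_setU1 /=; last by rewrite inE.
by rewrite big_set1 /=; case: (i \in P); case: (i \in Q).
Qed.

Lemma disj2 (T : finType) (a b c e : T) : a != c -> a != e -> b != c -> b != e ->
  [disjoint [set a; b] & [set c; e]].
Proof.
move=> ac ae bc be; apply/pred0P => z /=; rewrite !inE.
have [->|za] := eqVneq z a; first by rewrite (negbTE ac) (negbTE ae) andbF.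
have [->|zb] := eqVneq z b; first by rewrite (negbTE bc) (negbTE be) andbF.
by [].
Qed.

Lemma cover2 (T : finType) (A B : {set T}) : A != B -> cover [set A; B] = A :|: B.
Proof.
move=> nAB; rewrite /cover big_setU1 /=; last by rewrite inE.
by rewrite big_set1.
Qed.

Definition sw n (G : graph n) (a b c e : 'I_n) : graph n :=
  (G :\: [set [set a; b]; [set c; e]]) :|: [set [set a; c]; [set b; e]].

Lemma deg_gen n (G F F' : graph n) i : F \subset G -> F' :&: G = set0 ->
  #|[set f in F | i \in f]| = #|[set f in F' | i \in f]| ->
  deg ((G :\: F) :|: F') i = deg G i.
Proof.
move=> sFG dF' hc; rewrite /deg.
set S := [set f in G | i \in f].
set SF := [set f in F | i \in f].
set SF' := [set f in F' | i \in f].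
have -> : [set f in (G :\: F) :|: F' | i \in f] = (S :\: SF) :|: SF'.
  apply/setP => f; rewrite !inE.
  by case: (i \in f); case: (f \in F); case: (f \in G); case: (f \in F').
have dI : (S :\: SF) :&: SF' = set0.
  apply/setP => f; rewrite !inE.
  case hf: (f \in F') => //=; rewrite ?andbF ?andFb //=.
  have : f \in F' :&: G = false by rewrite dF' inE.
  rewrite inE hf /= => ->; by rewrite ?andbF ?andFb.
have sSF : SF \subset S.
  by apply/subsetP => f; rewrite !inE => /andP[/(subsetP sFG) -> ->].
rewrite cardsU dI cards0 subn0 cardsD (setIidPr sSF) -hc.
by rewrite subnK // subset_leq_card.
Qed.

Section SW.
Variables (n : nat) (d : 'I_n -> nat) (G : graph n) (a b c e : 'I_n).
Hypotheses (ab : a != b) (ac : a != c) (ae : a != e) (bc : b != c) (be : b != e) (ce : c != e).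
Hypotheses (hG : in_Gnd d G) (hab : [set a; b] \in G) (hce : [set c; e] \in G)
  (hac : [set a; c] \notin G) (hbe : [set b; e] \notin G).

Let F := [set [set a; b]; [set c; e]].
Let F' := [set [set a; c]; [set b; e]].

Lemma nFF : [set a; b] != [set c; e].
Proof. by rewrite set2E (negbTE ac) (negbTE ae). Qed.
Lemma nFF' : [set a; c] != [set b; e].
Proof. by rewrite set2E (negbTE ab) (negbTE ae). Qed.

Lemma sw_in_Gnd : in_Gnd d (sw G a b c e).
Proof.
case: hG => hs hdeg; split.
  apply/forall_inP => f; rewrite !inE => /orP[/andP[_ /(forall_inP hs) //]|].
  by case/orP => /eqP ->; rewrite cards2 ?ac ?be.
move=> i; rewrite /sw deg_gen ?hdeg //.
- by apply/subsetP => f; rewrite !inE => /orP[] /eqP ->.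
- apply/setP => f; rewrite !inE.
  case/boolP: (f == [set a; c]) => [/eqP ->|_] /=; first by rewrite (negbTE hac) ?andbF.
  case/boolP: (f == [set b; e]) => [/eqP ->|_] //=; by rewrite (negbTE hbe) ?andbF.
- rewrite !card_filt2 ?nFF ?nFF' // !inE.
  have [->|ia] := eqVneq i a; first by rewrite (negbTE ab) (negbTE ac) (negbTE ae).
  have [->|ib] := eqVneq i b; first by rewrite (negbTE bc) (negbTE be).
  have [->|ic] := eqVneq i c; first by rewrite (negbTE ce).
  by [].
Qed.

Lemma sw_switch : switch_via d G (sw G a b c e) F F'.
Proof.
have cF : cover F = [set a; b] :|: [set c; e] by rewrite cover2 // nFF.
split.
- by split => //; exact: sw_in_Gnd.
- split.
  + by apply/subsetP => f; rewrite !inE => /orP[] /eqP ->.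
  + by rewrite cards2 nFF.
  + apply/trivIsetP => A B; rewrite !inE => /orP[] /eqP -> /orP[] /eqP ->; rewrite ?eqxx // => _.
    * exact: disj2.
    * by rewrite disjoint_sym; apply: disj2.
  + rewrite cF cardsU cards2 cards2 ab ce.
    have -> : [set a; b] :&: [set c; e] = set0.
      by apply/eqP; rewrite setI_eq0; apply: disj2.
    by rewrite cards0.
- split.
  + apply/and3P; split.
    * rewrite cF cover2 ?nFF' //; apply/eqP/setP => z; rewrite !inE.
      by case: (z == a); case: (z == b); case: (z == c); case: (z == e).
    * apply/trivIsetP => A B; rewrite !inE => /orP[] /eqP -> /orP[] /eqP ->; rewrite ?eqxx // => _.
      - by apply: disj2; rewrite // eq_sym.
      - by rewrite disjoint_sym; apply: disj2; rewrite // eq_sym.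
    * rewrite !inE; apply/negP => /orP[] /eqP H.
      - by have := set21 a c; rewrite -H inE.
      - by have := set21 b e; rewrite -H inE.
  + apply/forall_inP => f; rewrite !inE => /orP[] /eqP ->; by rewrite cards2 ?ac ?be.
  + apply/negP => /eqP H.
    have : [set a; c] \in F by rewrite -H !inE eqxx.
    by rewrite !inE !set2E eq_sym (negbTE bc) (negbTE ab) (negbTE ac) (negbTE ae) /= ?andbF.
- apply/setP => f; rewrite !inE.
  case/boolP: (f == [set a; c]) => [/eqP ->|_] /=; first by rewrite (negbTE hac) ?andbF.
  case/boolP: (f == [set b; e]) => [/eqP ->|_] //=; by rewrite (negbTE hbe) ?andbF.
- by [].
Qed.

Lemma sw_tri (v : 'I_n) : v != a -> v != b -> v != c -> v != e ->
  [|| adj G a v && adj G b v, adj G c v && adj G e v,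
      adj G a v && adj G c v | adj G b v && adj G e v] ->
  is_triangle_switch d G (sw G a b c e).
Proof.
move=> va vb vc ve hv; exists F, F'; split; first exact: sw_switch.
have vF : v \notin cover F by rewrite cover2 ?nFF // !inE negb_or !negb_or va vb vc ve.
case/or4P: hv => /andP[h1 h2].
- by exists [set a; b]; split; [rewrite !inE eqxx | exists v; split => // x; rewrite !inE => /orP[]/eqP->].
- by exists [set c; e]; split; [rewrite !inE eqxx orbT | exists v; split => // x; rewrite !inE => /orP[]/eqP->].
- by exists [set a; c]; split; [rewrite !inE eqxx !orbT | exists v; split => // x; rewrite !inE => /orP[]/eqP->].
- by exists [set b; e]; split; [rewrite !inE eqxx !orbT | exists v; split => // x; rewrite !inE => /orP[]/eqP->].
Qed.
End SW.


Ltac neqs := repeat match goal with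
 | H : is_true (?u != ?w) |- context [?u == ?w] => rewrite (negbTE H)
 | H : is_true (?u != ?w) |- context [?w == ?u] => rewrite (eq_sym w u) (negbTE H)
 | |- context [?u == ?u] => rewrite eqxx
 end.
Ltac mems := repeat match goal with
 | H : is_true ([set ?u; ?w] \in ?G) |- context [[set ?u; ?w] \in ?G] => rewrite H
 | H : is_true ([set ?u; ?w] \in ?G) |- context [[set ?w; ?u] \in ?G] => rewrite (set2C w u) H
 | H : is_true ([set ?u; ?w] \notin ?G) |- context [[set ?u; ?w] \in ?G] => rewrite (negbTE H)
 | H : is_true ([set ?u; ?w] \notin ?G) |- context [[set ?w; ?u] \in ?G] => rewrite (set2C w u) (negbTE H)
 end.
Ltac bsimp := rewrite /= ?andbF ?andbT ?orbF ?orbT ?andFb ?andTb ?orFb ?orTb /=.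
Ltac bsolve := bsimp; try done;
  repeat (match goal with
          | |- context [?u == ?w] => case: (u == w)
          | |- context [?u \in ?w] => case: (u \in w)
          end); done.
Ltac unX := repeat match goal with Y := _ : graph _ |- _ => progress (unfold Y) end.
Ltac fact := unX; rewrite /adj /sw ?inE ?set2E; mems; neqs; bsolve.
Ltac vneq := solve [ assumption | rewrite eq_sym; assumption ].
Ltac sfact := first [ vneq | fact ].
Ltac tstep h := apply: (@sw_tri _ _ _ _ _ _ _ _ _ _ _ _ _ _ _ _ _ _ h); sfact.
Ltac fin_eq := unX; apply/setP => f; rewrite /sw !inE;
  repeat match goal with |- context [?f == ?P] => is_var f;
    case: (eqVneq f P) => [?|?]; [subst f|] end;
  rewrite ?set2E; mems; neqs; try bsolve;
  exfalso; match goal with H : is_true (_ != _) |- _ =>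
    move: H; rewrite ?set2E; neqs; rewrite /= ?andbT ?orbT; by [] end.
Ltac gstep := apply: sw_in_Gnd; sfact.

Section SC.
Variables (n : nat) (d : 'I_n -> nat) (G : graph n) (a1 a2 a3 a4 x x' y v : 'I_n).
Hypothesis hG : in_Gnd d G.
Hypotheses (n12 : a1 != a2) (n13 : a1 != a3) (n14 : a1 != a4) (n23 : a2 != a3)
  (n24 : a2 != a4) (n34 : a3 != a4).
Hypotheses (x1 : x != a1) (x2 : x != a2) (x3 : x != a3) (x4 : x != a4)
  (x'1 : x' != a1) (x'2 : x' != a2) (x'3 : x' != a3) (x'4 : x' != a4) (xx' : x != x')
  (y1 : y != a1) (y2 : y != a2) (y3 : y != a3) (y4 : y != a4) (yx : y != x) (yx' : y != x')
  (v1 : v != a1) (vx : v != x) (vx' : v != x') (vy : v != y).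
Hypotheses (m12 : [set a1; a2] \in G) (m34 : [set a3; a4] \in G) (m1x : [set a1; x] \in G)
  (m1x' : [set a1; x'] \in G) (mxy : [set x; y] \in G) (myv : [set y; v] \in G)
  (m13 : [set a1; a3] \notin G) (m24 : [set a2; a4] \notin G) (m1y : [set a1; y] \notin G)
  (mx'v : [set x'; v] \notin G) (mx4 : [set x; a4] \notin G).

Lemma SC_path : tsim_path d G (sw G a1 a2 a3 a4) 4.
Proof.
pose X1 := sw G a1 x' y v.
pose X2 := sw X1 a1 x a3 a4.
pose X3 := sw X2 a1 a2 x a4.
pose X4 := sw X3 a1 y x' v.
have g1 : in_Gnd d X1 by gstep.
have t1 : is_triangle_switch d G X1 by tstep x.
have g2 : in_Gnd d X2 by gstep.
have t2 : is_triangle_switch d X1 X2 by tstep y.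
have g3 : in_Gnd d X3 by gstep.
have t3 : is_triangle_switch d X2 X3 by tstep y.
have g4 : in_Gnd d X4 by gstep.
have t4 : is_triangle_switch d X3 X4 by tstep x.
have e4 : X4 = sw G a1 a2 a3 a4 by fin_eq.
exists (fun i => match i with 0 => G | 1 => X1 | 2 => X2 | 3 => X3 | _ => X4 end).
split => //.
- by case=> [|[|[|[|[|]]]]].
- by case=> [|[|[|[|]]]].
Qed.

End SC.

Section SB.
Variables (n : nat) (d : 'I_n -> nat) (G : graph n) (a1 a2 a3 a4 x y t h : 'I_n).
Hypothesis hG : in_Gnd d G.
Hypotheses (n12 : a1 != a2) (n13 : a1 != a3) (n14 : a1 != a4) (n23 : a2 != a3)
  (n24 : a2 != a4) (n34 : a3 != a4).
Hypotheses (x1 : x != a1) (x2 : x != a2) (x3 : x != a3) (x4 : x != a4)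
  (y1 : y != a1) (y2 : y != a2) (y3 : y != a3) (y4 : y != a4) (yx : y != x)
  (t1 : t != a1) (t3 : t != a3) (t4 : t != a4) (tx : t != x) (ty : t != y)
  (h1 : h != a1) (h2 : h != a2) (h3 : h != a3) (h4 : h != a4) (hx : h != x) (hy : h != y) (ht : h != t).
Hypotheses (m12 : [set a1; a2] \in G) (m34 : [set a3; a4] \in G) (m1x : [set a1; x] \in G)
  (mxy : [set x; y] \in G) (myt : [set y; t] \in G) (mxh : [set x; h] \in G) (mth : [set t; h] \in G)
  (m13 : [set a1; a3] \notin G) (m24 : [set a2; a4] \notin G) (m1y : [set a1; y] \notin G)
  (mxt : [set x; t] \notin G) (m3t : [set a3; t] \notin G) (mx4 : [set x; a4] \notin G).

Lemma SB_path : tsim_path d G (sw G a1 a2 a3 a4) 4.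
Proof.
pose X1 := sw G a1 x y t.
pose X2 := sw X1 a4 a3 x t.
pose X3 := sw X2 a1 a2 x a4.
pose X4 := sw X3 a1 y a3 t.
have g1 : in_Gnd d X1 by gstep.
have t1' : is_triangle_switch d G X1 by tstep h.
have g2 : in_Gnd d X2 by gstep.
have t2 : is_triangle_switch d X1 X2 by tstep h.
have g3 : in_Gnd d X3 by gstep.
have t3' : is_triangle_switch d X2 X3 by tstep y.
have g4 : in_Gnd d X4 by gstep.
have t4' : is_triangle_switch d X3 X4 by tstep x.
have e4 : X4 = sw G a1 a2 a3 a4 by fin_eq.
exists (fun i => match i with 0 => G | 1 => X1 | 2 => X2 | 3 => X3 | _ => X4 end).
split => //.
- by case=> [|[|[|[|[|]]]]].
- by case=> [|[|[|[|]]]].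
Qed.
End SB.


Lemma adj_sym n (G : graph n) u w : adj G u w = adj G w u.
Proof. by rewrite /adj eq_sym set2C. Qed.
Lemma adj_neq n (G : graph n) u w : adj G u w -> u != w.
Proof. by case/andP. Qed.
Lemma adj_mem n (G : graph n) u w : adj G u w -> [set u; w] \in G.
Proof. by case/andP. Qed.
Lemma nadj_mem n (G : graph n) u w : u != w -> ~~ adj G u w -> [set u; w] \notin G.
Proof. by rewrite /adj => ->. Qed.
Lemma neqA n (G : graph n) p u w : adj G p u -> ~~ adj G p w -> u != w.
Proof. by move=> h1; apply: contra => /eqP <-. Qed.

Lemma nbr_card n (G : graph n) v : is_simple G -> #|[set u | adj G v u]| = deg G v.
Proof.
move=> hs; rewrite /deg.
have -> : [set f in G | v \in f] = [set [set v; u] | u in [set u | adj G v u]].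
  apply/setP => f; rewrite inE; apply/andP/imsetP.
  - case=> fG vf.
    have /cards2P [p [q [pq ef]]] : #|f| == 2 by apply: (forall_inP hs).
    move: vf; rewrite ef !inE => /orP[] /eqP ev.
    + exists q; first by rewrite inE /adj ev pq -ef.
      by rewrite ev.
    + exists p; first by rewrite inE /adj ev eq_sym pq set2C -ef.
      by rewrite ev set2C.
  - by case=> u; rewrite inE => /andP[nvu m] ->; split => //; rewrite !inE eqxx.
rewrite card_in_imset //.
move=> u w; rewrite !inE => /andP[vu _] /andP[vw _] /eqP; rewrite set2E eqxx /=.
case/orP => [/eqP //| /andP[/eqP e1 /eqP e2]].
by move: vu; rewrite e2 eqxx.
Qed.

Lemma ex_in (T : finType) (A : {set T}) (l : seq T) : size l < #|A| ->
  exists2 u, u \in A & u \notin l.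
Proof.
move=> hl; apply/exists_inP; apply: contraLR hl; rewrite negb_exists_in -leqNgt => /forall_inP h.
apply: leq_trans (card_size l).
apply: subset_leq_card; apply/subsetP => u uA; have := h u uA; by rewrite negbK.
Qed.


Section Main.
Variables (n : nat) (d : 'I_n -> nat) (G : graph n) (a1 a2 a3 a4 : 'I_n).
Hypothesis hG : in_Gnd d G.
Hypotheses (n12 : a1 != a2) (n13 : a1 != a3) (n14 : a1 != a4) (n23 : a2 != a3)
  (n24 : a2 != a4) (n34 : a3 != a4).
Hypotheses (m12 : [set a1; a2] \in G) (m34 : [set a3; a4] \in G)
  (m13 : [set a1; a3] \notin G) (m24 : [set a2; a4] \notin G).
Hypotheses (na14 : ~~ adj G a1 a4) (na23 : ~~ adj G a2 a3).
Hypothesis hcn : forall x y w, x \in [set a1; a2; a3; a4] -> y \in [set a1; a2; a3; a4] ->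
     x != y -> ~ (adj G x w /\ adj G y w).
Hypothesis htri : forall j u w, j \in [set a1; a2; a3; a4] ->
     u \notin [set a1; a2; a3; a4] -> w \notin [set a1; a2; a3; a4] ->
     ~ [/\ adj G j u, adj G j w & adj G u w].

Let D := [set a1; a2; a3; a4].
Lemma inD1 : a1 \in D. Proof. by rewrite !inE eqxx. Qed.
Lemma inD2 : a2 \in D. Proof. by rewrite !inE eqxx ?orbT. Qed.
Lemma inD3 : a3 \in D. Proof. by rewrite !inE eqxx ?orbT. Qed.
Lemma inD4 : a4 \in D. Proof. by rewrite !inE eqxx ?orbT. Qed.

Lemma cnN p q w : p \in D -> q \in D -> p != q -> adj G p w -> ~~ adj G q w.
Proof. by move=> hp hq pq hw; apply/negP => hq'; exact: (hcn hp hq pq (conj hw hq')). Qed.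

Lemma na13 : ~~ adj G a1 a3. Proof. by rewrite /adj (negbTE m13) andbF. Qed.
Lemma na24 : ~~ adj G a2 a4. Proof. by rewrite /adj (negbTE m24) andbF. Qed.

Lemma notD u : u != a1 -> u != a2 -> u != a3 -> u != a4 -> u \notin D.
Proof. by move=> h1 h2 h3 h4; rewrite !inE (negbTE h1) (negbTE h2) (negbTE h3) (negbTE h4). Qed.

Lemma nbr1 u : adj G a1 u -> u != a2 ->
  [/\ u != a1, u != a3, u != a4, ~~ adj G u a2 & (~~ adj G u a3 /\ ~~ adj G u a4)].
Proof.
move=> h u2; split => //.
- by rewrite eq_sym; apply: adj_neq h.
- by apply: neqA h na13.
- by apply: neqA h na14.
- by rewrite adj_sym; exact: (cnN inD1 inD2 n12).
- split; first by rewrite adj_sym; exact: (cnN inD1 inD3 n13).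
  by rewrite adj_sym; exact: (cnN inD1 inD4 n14).
Qed.

Lemma caseC x x' y v : adj G a1 x -> adj G a1 x' -> x != a2 -> x' != a2 -> x != x' ->
  adj G x y -> y != a1 -> adj G y v -> v != x -> v != x' -> ~~ adj G x' v ->
  tsim_path d G (sw G a1 a2 a3 a4) 4.
Proof.
move=> ax ax' x2 x'2 xx' axy y1 ayv vx vx' nx'v.
have [x1 x3 x4 nx2 [nx3 nx4]] := nbr1 ax x2.
have [x'1 x'3 x'4 nx'2 [nx'3 nx'4]] := nbr1 ax' x'2.
have xD := notD x1 x2 x3 x4.
have x'D := notD x'1 x'2 x'3 x'4.
have nxx' : ~~ adj G x x'.
  by apply/negP => h; apply: (htri inD1 xD x'D); split.
have y2 : y != a2 by apply: neqA axy nx2.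
have y3 : y != a3 by apply: neqA axy nx3.
have y4 : y != a4 by apply: neqA axy nx4.
have yD := notD y1 y2 y3 y4.
have n1y : ~~ adj G a1 y.
  by apply/negP => h; apply: (htri inD1 xD yD); split.
have yx : y != x by rewrite eq_sym; apply: adj_neq axy.
have yx' : y != x' by apply: neqA axy nxx'.
have v1 : v != a1 by apply: (neqA ayv); rewrite adj_sym.
have vy : v != y by rewrite eq_sym; apply: adj_neq ayv.
have m1x := adj_mem ax. have m1x' := adj_mem ax'. have mxy := adj_mem axy.
have myv := adj_mem ayv.
have m1y : [set a1; y] \notin G by apply: nadj_mem => //; rewrite eq_sym.
have mx'v : [set x'; v] \notin G by apply: nadj_mem => //; rewrite eq_sym.
have mx4 : [set x; a4] \notin G by apply: nadj_mem.
by apply: (SC_path (x:=x) (x':=x') (y:=y) (v:=v)).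
Qed.

Lemma caseB x y t h : adj G a1 x -> x != a2 -> adj G x y -> y != a1 -> adj G y t ->
  t != x -> ~~ adj G x t -> t != a3 -> t != a4 -> ~~ adj G a3 t ->
  adj G x h -> adj G t h -> h != a1 -> h != y ->
  tsim_path d G (sw G a1 a2 a3 a4) 4.
Proof.
move=> ax x2 axy y1 ayt tx nxt t3 t4 n3t axh ath h1 hy.
have [x1 x3 x4 nx2 [nx3 nx4]] := nbr1 ax x2.
have xD := notD x1 x2 x3 x4.
have y2 : y != a2 by apply: neqA axy nx2.
have y3 : y != a3 by apply: neqA axy nx3.
have y4 : y != a4 by apply: neqA axy nx4.
have yD := notD y1 y2 y3 y4.
have n1y : ~~ adj G a1 y.
  by apply/negP => hh; apply: (htri inD1 xD yD); split.
have yx : y != x by rewrite eq_sym; apply: adj_neq axy.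
have t1 : t != a1 by apply: (neqA ayt); rewrite adj_sym.
have ty : t != y by rewrite eq_sym; apply: adj_neq ayt.
have h2 : h != a2 by apply: neqA axh nx2.
have h3 : h != a3 by apply: neqA axh nx3.
have h4 : h != a4 by apply: neqA axh nx4.
have hx : h != x by rewrite eq_sym; apply: adj_neq axh.
have ht : h != t by rewrite eq_sym; apply: adj_neq ath.
have m1x := adj_mem ax. have mxy := adj_mem axy. have myt := adj_mem ayt.
have mxh := adj_mem axh. have mth := adj_mem ath.
have m1y : [set a1; y] \notin G by apply: nadj_mem => //; rewrite eq_sym.
have mxt : [set x; t] \notin G by apply: nadj_mem => //; rewrite eq_sym.
have m3t : [set a3; t] \notin G by apply: nadj_mem => //; rewrite eq_sym.
have mx4 : [set x; a4] \notin G by apply: nadj_mem.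
by apply: (SB_path (x:=x) (y:=y) (t:=t) (h:=h)).
Qed.

Hypothesis hdeg3 : forall u, 3 <= #|[set w | adj G u w]|.

Lemma caseAB x x' : adj G a1 x -> adj G a1 x' -> x != a2 -> x' != a2 -> x != x' ->
  (forall y0 v0, adj G x y0 -> y0 != a1 -> adj G y0 v0 -> v0 != x -> v0 != x' -> adj G x' v0) ->
  (forall y0 v0, adj G x' y0 -> y0 != a1 -> adj G y0 v0 -> v0 != x' -> v0 != x -> adj G x v0) ->
  tsim_path d G (sw G a1 a2 a3 a4) 4.
Proof.
move=> ax ax' x2 x'2 xx' C1 C2.
have [x1 x3 x4 nx2 [nx3 nx4]] := nbr1 ax x2.
have [x'1 x'3 x'4 nx'2 [nx'3 nx'4]] := nbr1 ax' x'2.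
have xD := notD x1 x2 x3 x4.
have x'D := notD x'1 x'2 x'3 x'4.
have nxx' : ~~ adj G x x'.
  by apply/negP => h; apply: (htri inD1 xD x'D); split.
case: (ex_in (l := [:: a1]) (leq_trans (isT : 2 <= 3) (hdeg3 x))) => y.
rewrite inE => axy; rewrite !inE => y1.
have y2 : y != a2 by apply: neqA axy nx2.
have y3 : y != a3 by apply: neqA axy nx3.
have y4 : y != a4 by apply: neqA axy nx4.
have yD := notD y1 y2 y3 y4.
have n1y : ~~ adj G a1 y.
  by apply/negP => h; apply: (htri inD1 xD yD); split.
have yx : y != x by rewrite eq_sym; apply: adj_neq axy.
case: (ex_in (l := [:: x; x']) (hdeg3 y)) => t.
rewrite inE => ayt; rewrite !inE negb_or => /andP[tx tx'].
have t1 : t != a1 by apply: (neqA ayt); rewrite adj_sym.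
have ty : t != y by rewrite eq_sym; apply: adj_neq ayt.
have axt' : adj G x' t := C1 y t axy y1 ayt tx tx'.
have t2 : t != a2 by apply: (neqA axt').
have t3 : t != a3 by apply: (neqA axt').
have t4 : t != a4 by apply: (neqA axt').
case/boolP: (adj G x t) => [axt | nxt].
- have ayx' : adj G y x'.
    rewrite adj_sym; apply: (C1 t y axt t1) => //; first by rewrite adj_sym.
    by apply: neqA axy nxx'.
  apply: (caseB (x:=x) (y:=y) (t:=x') (h:=t)) => //.
  + by rewrite eq_sym.
  + by rewrite adj_sym.
- have tD := notD t1 t2 t3 t4.
  have nt1 : ~~ adj G t a1.
    by rewrite adj_sym; apply/negP => h; apply: (htri inD1 x'D tD); split.
  case: (ex_in (l := [:: x'; y]) (hdeg3 t)) => h.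
  rewrite inE => ath; rewrite !inE negb_or => /andP[hx' hy'].
  have hx : h != x by apply: (neqA ath); rewrite adj_sym.
  have axh : adj G x h := C2 t h axt' t1 ath hx' hx.
  have n3t : ~~ adj G a3 t.
    apply/negP => h3t.
    have h3t' : adj G t a3 by rewrite adj_sym.
    have a3x' : a3 != x' by rewrite eq_sym.
    have a3x : a3 != x by rewrite eq_sym.
    have := C2 t a3 axt' t1 h3t' a3x' a3x.
    by rewrite (negbTE nx3).
  apply: (caseB (x:=x) (y:=y) (t:=t) (h:=h)) => //.
  by apply: (neqA ath).
Qed.
End Main.


Theorem lemma3 (n : nat) (d : 'I_n -> nat) (G H : graph n)
    (a1 a2 a3 a4 : 'I_n) :
  graphical d ->
  (forall i, 3 <= d i) ->
  switch_via d G H [set [set a1; a2]; [set a3; a4]]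
                   [set [set a1; a3]; [set a2; a4]] ->
  ~~ adj G a1 a4 -> ~~ adj G a2 a3 ->
  (forall x y w, x \in [set a1; a2; a3; a4] -> y \in [set a1; a2; a3; a4] ->
     x != y -> ~ (adj G x w /\ adj G y w)) ->
  (forall j u w, j \in [set a1; a2; a3; a4] ->
     u \notin [set a1; a2; a3; a4] -> w \notin [set a1; a2; a3; a4] ->
     ~ [/\ adj G j u, adj G j w & adj G u w]) ->
  exists kappa, kappa <= 5 /\ tsim_path d G H kappa.
Proof.
move=> _ hd3 hsw na14 na23 hcn htri.
case: hsw => [[hG _] [sFG cF _ cvF] _ dis HH].
case: (hG) => hs hdeg.
have m12 : [set a1; a2] \in G by apply: (subsetP sFG); rewrite !inE eqxx.
have m34 : [set a3; a4] \in G by apply: (subsetP sFG); rewrite !inE eqxx orbT.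
have n12 : a1 != a2 by have := forall_inP hs _ m12; rewrite cards2; case: (a1 != a2).
have n34 : a3 != a4 by have := forall_inP hs _ m34; rewrite cards2; case: (a3 != a4).
have nF : [set a1; a2] != [set a3; a4] by move: cF; rewrite cards2; case: (_ != _).
have I0 : [set a1; a2] :&: [set a3; a4] = set0.
  have := cardsUI [set a1; a2] [set a3; a4]; rewrite -cover2 // cvF !cards2 n12 n34 /= => /eqP.
  by rewrite -[X in _ == X](addn0 4) eqn_add2l cards_eq0 => /eqP.
have nI : forall u, u \in [set a1; a2] -> u \in [set a3; a4] -> False.
  move=> u h1 h2; have : u \in [set a1; a2] :&: [set a3; a4] by rewrite inE h1 h2.
  by rewrite I0 inE.
have n13 : a1 != a3 by apply/negP => /eqP e; apply: (nI a1); rewrite !inE e eqxx ?orbT.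
have n14 : a1 != a4 by apply/negP => /eqP e; apply: (nI a1); rewrite !inE e eqxx ?orbT.
have n23 : a2 != a3 by apply/negP => /eqP e; apply: (nI a2); rewrite !inE e eqxx ?orbT.
have n24 : a2 != a4 by apply/negP => /eqP e; apply: (nI a2); rewrite !inE e eqxx ?orbT.
have m13 : [set a1; a3] \notin G.
  apply/negP => m.
  have : [set a1; a3] \in [set [set a1; a3]; [set a2; a4]] :&:
     (G :\: [set [set a1; a2]; [set a3; a4]]).
    rewrite !inE eqxx m /= !set2E eqxx /=.
    by rewrite [a3 == a2]eq_sym (negbTE n23) (negbTE n12) (negbTE n13) (negbTE n14) /= ?andbF.
  by rewrite dis inE.
have m24 : [set a2; a4] \notin G.
  apply/negP => m.
  have : [set a2; a4] \in [set [set a1; a3]; [set a2; a4]] :&: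
     (G :\: [set [set a1; a2]; [set a3; a4]]).
    rewrite !inE eqxx m /= !set2E eqxx /=.
    by neqs; bsolve.
  by rewrite dis inE.
have hdeg3 : forall u, 3 <= #|[set w | adj G u w]| by move=> u; rewrite nbr_card // hdeg.
exists 4; split => //.
rewrite HH -/(sw G a1 a2 a3 a4).
case: (ex_in (l := [:: a2]) (leq_trans (isT : 2 <= 3) (hdeg3 a1))) => x.
rewrite inE => ax; rewrite !inE => x2.
case: (ex_in (l := [:: a2; x]) (hdeg3 a1)) => x'.
rewrite inE => ax'; rewrite !inE negb_or => /andP[x'2 x'x].
have xx' : x != x' by rewrite eq_sym.
case/boolP: [exists y0, exists v0,
   [&& adj G x y0, y0 != a1, adj G y0 v0, v0 != x, v0 != x' & ~~ adj G x' v0]].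
  case/existsP => y0 /existsP [v0 /and5P [h1 h2 h3 h4 /andP [h5 h6]]].
  by apply: (@caseC _ _ _ _ _ _ _ hG n12 n13 n14 n23 n24 n34 m12 m34 m13 m24 na14 hcn htri x x' y0 v0).
move=> nC1.
case/boolP: [exists y0, exists v0,
   [&& adj G x' y0, y0 != a1, adj G y0 v0, v0 != x', v0 != x & ~~ adj G x v0]].
  case/existsP => y0 /existsP [v0 /and5P [h1 h2 h3 h4 /andP [h5 h6]]].
  by apply: (@caseC _ _ _ _ _ _ _ hG n12 n13 n14 n23 n24 n34 m12 m34 m13 m24 na14 hcn htri x' x y0 v0).
move=> nC2.
apply: (@caseAB _ _ _ _ _ _ _ hG n12 n13 n14 n23 n24 n34 m12 m34 m13 m24 na14 hcn htri hdeg3 x x') => //.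
- move=> y0 v0 h1 h2 h3 h4 h5; apply/negPn/negP => h6; move/negP: nC1; apply.
  by apply/existsP; exists y0; apply/existsP; exists v0; rewrite h1 h2 h3 h4 h5 h6.
- move=> y0 v0 h1 h2 h3 h4 h5; apply/negPn/negP => h6; move/negP: nC2; apply.
  by apply/existsP; exists y0; apply/existsP; exists v0; rewrite h1 h2 h3 h4 h5 h6.
Qed.
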